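(* Let $X$ be a separable metrizable space with $\operatorname{card}(X)>1$, let $S$ be a ubiquitously dense subset of $X$, and put $\kappa=\operatorname{card}(S)$. Then there exists a family $\{A(\alpha)\}_{\alpha<\kappa}$ of subsets of $X$ such that: (1) each $A(\alpha)$ is countable; (2) each $A(\alpha)$ is dense in $X$; (3) $A(\alpha)\cap A(\beta)=\emptyset$ whenever $\alpha\neq\beta$; (4) $S=\bigcup_{\alpha<\kappa}A(\alpha)$.
   Context: A subset $S$ of a topological space $X$ is ubiquitously dense if $\operatorname{card}(U\cap S)=\operatorname{card}(S)$ for every non-empty open subset $U$ of $X$. Cardinals are identified with initial ordinals, so $\alpha<\kappa$ ranges over ordinals less than $\kappa$. *)

(* Defs.v *)
From mathcomp Require Import all_boot all_order all_algebra.
From mathcomp Require Import all_classical all_reals all_analysis.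
From Stdlib Require Import Reals.
Set Implicit Arguments. Unset Strict Implicit. Unset Printing Implicit Defensive.
Local Open Scope classical_set_scope.
Local Open Scope card_scope.

Definition metrizable (X : topologicalType) : Prop :=
  exists d : X -> X -> Rdefinitions.R,
    (forall x y, Rle 0 (d x y)) /\
    (forall x y, d x y = 0%R <-> x = y) /\
    (forall x y, d x y = d y x) /\
    (forall x y z, Rle (d x z) (Rplus (d x y) (d y z))) /\
    (forall U : set X, open U <->
       (forall x, U x -> exists e, Rlt 0 e /\ (forall y, Rlt (d x y) e -> U y))).

Definition separable (X : topologicalType) : Prop :=
  exists D : set X, countable D /\ dense D.

Definition ubiquitously_dense (X : topologicalType) (S : set X) : Prop :=
  forall U : set X, open U -> U !=set0 -> (U `&` S) #= S.

(* Main.v *)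
Require Import Defs.
From mathcomp Require Import all_boot all_order all_algebra.
From mathcomp Require Import all_classical all_reals all_analysis.
From mathcomp Require Import finmap.
From Stdlib Require Import Reals Lra Lia Cantor.
Set Implicit Arguments. Unset Strict Implicit. Unset Printing Implicit Defensive.
Local Open Scope classical_set_scope.
Local Open Scope card_scope.

Fixpoint pre_seq (X : Type) (g : nat * set X -> X) (n : nat) : set X :=
  match n with 0 => set0 | S m => pre_seq g m `|` [set g (m, pre_seq g m)] end.

Lemma pick_distinct (X : Type) (E : nat -> set X) :
  (forall n, infinite_set (E n)) ->
  exists x : nat -> X, injective x /\ forall n, E n (x n).
Proof.
move=> Einf.
have [y0 _] := infinite_setN0 (Einf 0).
have H : forall p : nat * set X, exists y, finite_set p.2 -> E p.1 y /\ ~ p.2 y.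
  move=> [n F] /=; have [Ff|nFf] := pselect (finite_set F).
    have [y [Ey nFy]] := infinite_setN0 (infinite_setD (Einf n) Ff).
    by exists y.
  by exists y0.
have [g Hg] := choice H.
pose x n := g (n, pre_seq g n).
have finpre : forall n, finite_set (pre_seq g n).
  elim=> [|n IH] /=; first exact: finite_set0.
  by rewrite finite_setU; split => //; exact: finite_set1.
have xin : forall k n, (k < n)%N -> pre_seq g n (x k).
  move=> k; elim=> [//|n IH] kn /=.
  rewrite ltnS leq_eqVlt in kn; case/orP: kn => [/eqP ->|kn].
    by right.
  by left; apply: IH.
have xout : forall n, ~ pre_seq g n (x n).
  by move=> n; have [] := Hg (n, pre_seq g n) (finpre n).
exists x; split; last first.
  by move=> n; have [] := Hg (n, pre_seq g n) (finpre n).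
move=> a b xab; apply/eqP; case: (ltngtP a b) => // ab.
  by exfalso; apply: (xout b); rewrite -xab; apply: xin.
by exfalso; apply: (xout a); rewrite xab; apply: xin.
Qed.

Definition good (X : Type) (C : nat -> set X) (R : set (X * nat * X)) : Prop :=
 [/\ (forall j n x x', R (j,n,x) -> R (j,n,x') -> x = x'),
     (forall j j' n m x, R (j,n,x) -> R (j',m,x) -> j = j' /\ n = m),
     (forall j n x m, R (j,n,x) -> exists y, R (j,m,y)),
     (forall x, (exists j n, R (j,n,x)) <-> (exists n y, R (x,n,y))) &
     (forall j n x, R (j,n,x) -> C n x)].

Lemma good_chain (X : Type) (C : nat -> set X) (F : set (set (X * nat * X))) :
  F `<=` good C -> total_on F subset -> good C (\bigcup_(Y in F) Y).
Proof.
move=> FG Ftot.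
have both : forall t1 t2, (\bigcup_(Y in F) Y) t1 -> (\bigcup_(Y in F) Y) t2 ->
    exists2 Y, F Y & Y t1 /\ Y t2.
  move=> t1 t2 [Y1 FY1 Y1t] [Y2 FY2 Y2t].
  case: (Ftot _ _ FY1 FY2) => sub.
    by exists Y2 => //; split => //; apply: sub.
  by exists Y1 => //; split => //; apply: sub.
split.
- move=> j n x x' h1 h2; have [Y FY [a b]] := both _ _ h1 h2.
  by have [f _ _ _ _] := FG _ FY; apply: f a b.
- move=> j j' n m x h1 h2; have [Y FY [a b]] := both _ _ h1 h2.
  by have [_ f _ _ _] := FG _ FY; apply: f a b.
- move=> j n x m [Y FY Yt]; have [_ _ f _ _] := FG _ FY.
  by have [y Yy] := f _ _ _ m Yt; exists y; exists Y.
- move=> x; split.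
  + move=> [j [n [Y FY Yt]]]; have [_ _ _ f _] := FG _ FY.
    by have [n' [y Yy]] := (f x).1 (ex_intro _ j (ex_intro _ n Yt)); exists n', y, Y.
  + move=> [n [y [Y FY Yt]]]; have [_ _ _ f _] := FG _ FY.
    by have [j [n' Yy]] := (f x).2 (ex_intro _ n (ex_intro _ y Yt)); exists j, n', Y.
- move=> j n x [Y FY Yt]; have [_ _ _ _ f] := FG _ FY; exact: f Yt.
Qed.

Lemma good_max (X : Type) (C : nat -> set X) :
  exists R, good C R /\
    exists n0, finite_set (C n0 `\` [set j | exists n y, R (j,n,y)]).
Proof.
have [to_nat [of_nat [cancel_of_to cancel_to_of]]] :
  exists (f : nat * nat -> nat) (g : nat -> nat * nat),
    (forall p, g (f p) = p) /\ (forall n, f (g n) = n).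
  by exists Cantor.to_nat, Cantor.of_nat; split;
    [exact: Cantor.cancel_of_to | exact: Cantor.cancel_to_of].
have [R [gR maxR]] := Zorn_bigcup (@good_chain X C).
exists R; split => //.
apply: contrapT => Hn.
pose J := [set j | exists n y, R (j,n,y)].
have Hinf : forall m, infinite_set (C (of_nat m).2 `\` J).
  by move=> m Hf; apply: Hn; exists (of_nat m).2.
have [x [xinj xE]] := pick_distinct Hinf.
have xJ : forall k, ~ J (x k) by move=> k; have [] := xE k.
have [f1 f2 f3 f4 f5] := gR.
pose N := [set t | exists a n, t = (x a, n, x (to_nat (a, n)))].
apply: (maxR (R `|` N)).
  split; first by move=> t Rt; left.
  move=> /(_ (x 0, 0, x (to_nat (0,0))))/(_ (or_intror (ex_intro _ 0 (ex_intro _ 0 erefl)))) R0.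
  by apply: (xJ 0); exists 0, (x (to_nat (0, 0))).
split.
- move=> j n v v' [h1|[a [n1 e1]]] [h2|[b [n2 e2]]].
  + exact: f1 h1 h2.
  + by case: e2 => -> _ _ in h1; exfalso; apply: (xJ b); exists n, v.
  + by case: e1 => -> _ _ in h2; exfalso; apply: (xJ a); exists n, v'.
  + case: e1 => ej en ev; case: e2 => ej' en' ev'.
    have ab : a = b by apply: xinj; rewrite -ej -ej'.
    by rewrite ev ev' ab -en -en'.
- move=> j j' n m v [h1|[a [n1 e1]]] [h2|[b [n2 e2]]].
  + exact: f2 h1 h2.
  + case: e2 => _ _ ev; exfalso.
    have [k [y Ry]] := (f4 v).1 (ex_intro _ j (ex_intro _ n h1)).
    by apply: (xJ (to_nat (b, n2))); rewrite -ev; exists k, y.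
  + case: e1 => _ _ ev; exfalso.
    have [k [y Ry]] := (f4 v).1 (ex_intro _ j' (ex_intro _ m h2)).
    by apply: (xJ (to_nat (a, n1))); rewrite -ev; exists k, y.
  + case: e1 => ej en ev; case: e2 => ej' en' ev'.
    have := xinj _ _ (etrans (esym ev) ev') => HH0; move: HH0.
    move=> HH; have := congr1 of_nat HH; rewrite !cancel_of_to => -[ab nm].
    by rewrite ej ej' en en' ab nm.
- move=> j n v m [h1|[a [n1 e1]]].
  + by have [y Ry] := f3 _ _ _ m h1; exists y; left.
  + case: e1 => -> _ _; exists (x (to_nat (a, m))); right; by exists a, m.
- move=> v; split.
  + move=> [j [n [h1|[a [n1 e1]]]]].
    * by have [k [y Ry]] := (f4 v).1 (ex_intro _ j (ex_intro _ n h1)); exists k, y; left.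
    * case: e1 => _ _ ->; exists 0, (x (to_nat (to_nat (a, n1), 0))); right.
      by exists (to_nat (a, n1)), 0.
  + move=> [n [y [h1|[a [n1 e1]]]]].
    * by have [k [j Ry]] := (f4 v).2 (ex_intro _ n (ex_intro _ y h1)); exists k, j; left.
    * case: e1 => -> _ _; exists (x (of_nat a).1), (of_nat a).2; right.
      exists (of_nat a).1, (of_nat a).2.
      by rewrite -surjective_pairing cancel_to_of.
- move=> j n v [h1|[a [n1 e1]]]; first exact: f5 h1.
  case: e1 => _ -> ->; have [] := xE (to_nat (a, n1)).
  by rewrite cancel_of_to.
Qed.

Lemma finite_noshrink (T : choiceType) (A : set T) a :
  finite_set A -> A a -> ~ (A #<= A `\ a).
Proof.
move=> fA Aa le.
have fD : finite_set (A `\ a) by apply: finite_setD.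
have [m Dm] := fD.
have Am : A #<= `I_m by apply: card_le_trans le _; have /card_eqPle[] := Dm.
have h1 := geq_card_fset_set Am.
have h2 := card_fset_set Dm.
rewrite fset_setD1 // in h2.
have := cardfsD1 a (fset_set A).
rewrite h2 in_fset_set // mem_set //=.
move=> e; rewrite e in h1; by rewrite ltnn in h1.
Qed.

Lemma metric_ball_open (X : topologicalType) (d : X -> X -> R) c r :
  (forall x y z, Rle (d x z) (Rplus (d x y) (d y z))) ->
  (forall U : set X, open U <->
       (forall x, U x -> exists e, Rlt 0 e /\ (forall y, Rlt (d x y) e -> U y))) ->
  open [set y | Rlt (d c y) r].
Proof.
move=> dtri dopen; apply/dopen => y /= hy.
exists (Rminus r (d c y)); split; first lra.
move=> z hz; have := dtri c y z; lra.
Qed.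

Lemma finite_ubiq (X : topologicalType) (S : set X) :
  metrizable X -> (exists x y : X, x <> y) -> ubiquitously_dense S ->
  finite_set S -> S = set0.
Proof.
move=> [d [d0 [dxy [dsym [dtri dopen]]]]] [x [y xy]] ud fS.
apply/seteqP; split => // s Ss; exfalso.
pose U := [set z | z <> s].
have oU : open U.
  apply/dopen => z zs; exists (d z s); split.
    have := d0 z s; have : d z s <> 0%R by move=> /dxy.
    lra.
  move=> w hw ws; rewrite ws in hw; lra.
have nU : U !=set0.
  have [xs|xs] := pselect (x = s); last by exists x.
  by exists y; rewrite /U /= -xs => /esym.
have := ud U oU nU => /card_eqPle[_ le].
apply: (finite_noshrink fS Ss); apply: card_le_trans le _.
apply: subset_card_le => z [Uz Sz]; split => //.
Qed.

Lemma base_exists (X : topologicalType) (x0 : X) :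
  separable X -> metrizable X ->
  exists b : nat -> set X, (forall n, open (b n)) /\ (forall n, b n !=set0) /\
    (forall O, open O -> O !=set0 -> exists n, b n `<=` O).
Proof.
move=> [D [Dc Dd]] [d [d0 [dxy [dsym [dtri dopen]]]]].
have /countable_injP [f finj] := Dc.
have : forall k, exists y, (exists z, D z /\ f z = k) -> D y /\ f y = k.
  move=> k; have [[z hz]|nz] := pselect (exists z, D z /\ f z = k).
    by exists z.
  by exists x0.
move=> /choice [e He].
have De : forall z, D z -> e (f z) = z.
  move=> z Dz; have [De fe] := He (f z) (ex_intro _ z (conj Dz erefl)).
  by apply: finj; [exact/mem_set | exact/mem_set | exact: fe].
pose ball c r := [set y | Rlt (d c y) r].
exists (fun n => ball (e (Cantor.of_nat n).1) (Rinv (INR (S (Cantor.of_nat n).2)))).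
split; first by move=> n; apply: metric_ball_open.
split.
  move=> n; exists (e (Cantor.of_nat n).1).
  change (Rlt (d (e (Cantor.of_nat n).1) (e (Cantor.of_nat n).1)) (Rinv (INR (S (Cantor.of_nat n).2)))).
  have -> : d (e (Cantor.of_nat n).1) (e (Cantor.of_nat n).1) = 0%R by apply/dxy.
  apply: Rinv_0_lt_compat; rewrite S_INR; have := pos_INR (Cantor.of_nat n).2; lra.
move=> O oO [x Ox].
have [eps [eps0 epsO]] := (dopen O).1 oO x Ox.
have oB : open (ball x (Rdiv eps 2%R)) by apply: metric_ball_open.
have nB : ball x (Rdiv eps 2%R) !=set0.
  exists x; rewrite /ball /=; have -> : d x x = 0%R by apply/dxy.
  lra.
have [z [Bz Dz]] := Dd _ nB oB.
have [N [hN N0]] := archimed_cor1 (Rdiv eps 2%R) ltac:(lra).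
exists (Cantor.to_nat (f z, N.-1)) => w hw.
change (Rlt (d (e (Cantor.of_nat (Cantor.to_nat (f z, N.-1))).1) w)
  (Rinv (INR (S (Cantor.of_nat (Cantor.to_nat (f z, N.-1))).2)))) in hw.
rewrite Cantor.cancel_of_to in hw.
change (Rlt (d (e (f z)) w) (Rinv (INR (S N.-1)))) in hw.
rewrite De // prednK in hw; last by apply/ltP.
apply: epsO; have := dtri x z w.
change (Rlt (d x z) (Rdiv eps 2%R)) in Bz. lra.
Qed.

Lemma card_le_of_fun (T U : Type) (A : set T) (B : set U) (f : T -> U) :
  (forall x, A x -> B (f x)) ->
  (forall x y, A x -> A y -> f x = f y -> x = y) -> A #<= B.
Proof.
move=> fAB finj.
have : $|{injfun A >-> B}|.
  apply/injfunPex; exists f.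
    by move=> x Ax; apply: fAB.
  by move=> x y /set_mem Ax /set_mem Ay; apply: finj.
by move=> [g]; exact: inj_card_le g.
Qed.

Lemma fun_of_card_le (T U : Type) (A : set T) (B : set U) (u0 : U) :
  A #<= B -> exists f : T -> U,
    (forall x, A x -> B (f x)) /\ (forall x y, A x -> A y -> f x = f y -> x = y).
Proof.
move=> /card_leP [g].
pose f x := match pselect (A x) with
  | left h => val (g (exist _ x (mem_set h)))
  | right _ => u0 end.
exists f; split.
  move=> x Ax; rewrite /f; case: pselect => // h.
  exact: set_mem (valP (g _)).
move=> x y Ax Ay; rewrite /f; case: pselect => // hx; case: pselect => // hy.
move=> /val_inj /(@inj _ _ _ g) => /(_ (in_setT _) (in_setT _)).
by move=> /(congr1 val).
Qed.

Lemma countableU2 (T : Type) (A B : set T) :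
  countable A -> countable B -> countable (A `|` B).
Proof.
move=> cA cB.
have -> : A `|` B = \bigcup_(b in [set: bool]) (if b then A else B).
  apply/seteqP; split => x.
    by case=> h; [exists true | exists false].
  by case=> -[] _ h; [left | right].
apply: bigcup_countable; first exact: countableP.
by move=> [] _.
Qed.

Theorem theorem2p3 (X : topologicalType) (S : set X) :
  separable X -> metrizable X ->
  (exists x y : X, x <> y) ->
  ubiquitously_dense S ->
  exists (I : Type) (A : I -> set X),
    [set: I] #= S /\
    (forall a, countable (A a)) /\
    (forall a, dense (A a)) /\
    (forall a b, a <> b -> A a `&` A b = set0) /\
    S = \bigcup_(a in [set: I]) A a.
Proof.
move=> sepX metX twoX ud.
have [x0 _] : exists x0 : X, True by case: twoX => x [y _]; exists x.
have [b [bo [bn bbase]]] := base_exists x0 sepX metX.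
pose C n := b n `&` S.
have CS : forall n, C n #= S by move=> n; apply: ud.
have [R [[f1 f2 f3 f4 f5] [n0 Fn0]]] := good_max C.
pose J := [set j | exists n y, R (j,n,y)].
have : forall jn : X * nat, exists y, J jn.1 -> R (jn.1, jn.2, y).
  move=> [j n] /=; have [[m [y Ry]]|nJ] := pselect (J j).
    by have [y' Ry'] := f3 _ _ _ n Ry; exists y'.
  by exists x0.
move=> /choice [p0 Hp0].
pose p j n := p0 (j, n).
have Hp : forall j n, J j -> R (j, n, p j n) by move=> j n Jj; exact: Hp0 (j, n) Jj.
have pC : forall j n, J j -> C n (p j n) by move=> j n Jj; exact: f5 (Hp j n Jj).
have pJ : forall j n, J j -> J (p j n).
  move=> j n Jj; exact: (f4 _).1 (ex_intro _ j (ex_intro _ n (Hp j n Jj))).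
have JS : forall j, J j -> S j.
  move=> j Jj; have [i [n Rj]] := (f4 j).2 Jj; have [] := f5 _ _ _ Rj => //.
have SleJ : S #<= J.
  have [[j0 Jj0]|nJ] := pselect (J !=set0).
    have /countable_injP [g ginj] := finite_set_countable Fn0.
    pose h x := if pselect (J x) then p x 0 else p j0 (g x).+1.
    have CJ : C n0 #<= J.
      apply: (@card_le_of_fun _ _ _ _ h).
        by move=> x _; rewrite /h; case: pselect => hx; apply: pJ.
      move=> x y Cx Cy; rewrite /h.
      case: pselect => hx; case: pselect => hy e.
      - by have [] := f2 _ _ _ _ _ (Hp x 0 hx) (eq_ind_r (fun z => R (y, 0, z)) (Hp y 0 hy) e).
      - by have [] := f2 _ _ _ _ _ (Hp x 0 hx) (eq_ind_r (fun z => R (j0, _, z)) (Hp j0 (g y).+1 Jj0) e).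
      - by have [] := f2 _ _ _ _ _ (Hp j0 (g x).+1 Jj0) (eq_ind_r (fun z => R (y, 0, z)) (Hp y 0 hy) e).
      - have [_ /eqP] := f2 _ _ _ _ _ (Hp j0 (g x).+1 Jj0)
          (eq_ind_r (fun z => R (j0, _, z)) (Hp j0 (g y).+1 Jj0) e).
        rewrite eqSS => /eqP gxy.
        by apply: ginj => //; apply/mem_set.
    by apply: card_le_trans CJ; have /card_eqPle[] := CS n0.
  have J0 : J = set0 by apply/seteqP; split => // j Jj; apply: nJ; exists j.
  have fC : finite_set (C n0) by move: Fn0; rewrite -/J J0 setD0.
  have fS : finite_set S by rewrite -(eq_finite_set (CS n0)).
  rewrite (finite_ubiq metX twoX ud fS); exact: card_ge0.
have JeqS : J #= S by apply/card_eqPle; split => //; apply: subset_card_le.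
have [h [hJ hinj]] := fun_of_card_le x0 SleJ.
pose A (i : J) := [set p (val i) n | n in [set: nat]] `|`
                  [set s | S s /\ ~ J s /\ h s = val i].
have iJ : forall i : J, J (val i) by move=> i; exact: set_mem (valP i).
exists J, A; split; first exact: card_eq_trans (card_setT J) JeqS.
split.
  move=> i; apply: countableU2.
    apply: card_le_trans (card_image_le _ _) _; exact: card_lexx.
  have [[s0 Ls0]|nL] := pselect ([set s | S s /\ ~ J s /\ h s = val i] !=set0).
    apply: (@sub_countable _ _ _ [set s0]); last exact: countable1.
    apply: subset_card_le => s [Ss [nJs hs]]; case: Ls0 => [Ss0 [_ hs0]].
    by apply: hinj => //; rewrite hs hs0.
  have -> : [set s | S s /\ ~ J s /\ h s = val i] = set0.
    by apply/seteqP; split => // s Ls; apply: nL; exists s.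
  exact: countable0.
split.
  move=> i O On Oo; have [n bO] := bbase O Oo On.
  exists (p (val i) n); split; first by apply: bO; have [] := pC (val i) n (iJ i).
  by left; exists n.
split.
  move=> i k ik; apply/seteqP; split => // z [Az Bz]; apply: ik.
  case: Az => [[n _ ez]|[Sz [nJz hz]]]; case: Bz => [[m _ ez']|[Sz' [nJz' hz']]].
  - apply: val_inj; have [] := f2 _ _ _ _ _ (Hp _ n (iJ i))
      (eq_ind_r (fun w => R (val k, m, w)) (Hp _ m (iJ k)) (etrans ez (esym ez'))).
    by [].
  - by exfalso; apply: nJz'; rewrite -ez; apply: pJ.
  - by exfalso; apply: nJz; rewrite -ez'; apply: pJ.
  - by apply: val_inj; rewrite -hz -hz'.
apply/seteqP; split.
  move=> s Ss; have [Js|nJs] := pselect (J s).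
    have [j [n Rjs]] := (f4 s).2 Js.
    have Jj : J j by exists n, s.
    exists (exist _ j (mem_set Jj)) => //; left; exists n => //=.
    exact: f1 (Hp j n Jj) Rjs.
  exists (exist _ (h s) (mem_set (hJ s Ss))) => //; right => /=.
  by split.
move=> z [i _ [[n _ <-]|[Sz _]]] //.
by have [] := pC (val i) n (iJ i).
Qed.
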